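(* Let $\Sigma$ be a signature containing two non-rigid constant symbols $a$ and $b$, and let $M=(W,D,I)$ be a full id-model for $\Sigma$. Then $$M\models\eta \iff D \text{ is finite},$$ where $\eta := \big(\mathrm{dep}(a,b)\wedge \mathrm{dep}(b,a)\wedge \exists^{\mathsf i}x\,(x\neq b)\big)\to \exists^{\mathsf i}x\,(x\neq a)$.
   Context: Inquisitive first-order logic InqBQ. A signature consists of predicate symbols and function symbols, each with an arity; function symbols are either rigid or non-rigid, and function symbols of arity $0$ are constant symbols. Terms are built from variables and function symbols as usual. Formulas are given by $\phi ::= P(t_1,\dots,t_n)\mid (t=t')\mid \bot\mid (\phi\wedge\phi)\mid(\phi\mathbin{\vee\!\!\!\vee}\phi)\mid(\phi\to\phi)\mid\forall x\phi\mid\exists^{\mathsf i}x\phi$, where $\mathbin{\vee\!\!\!\vee}$ is inquisitive disjunction and $\exists^{\mathsf i}$ is the inquisitive existential quantifier. Abbreviations: $\neg\phi:=\phi\to\bot$, $(t\neq t'):=\neg(t=t')$, $?\phi:=\phi\mathbin{\vee\!\!\!\vee}\neg\phi$. Formulas without $\mathbin{\vee\!\!\!\vee}$ and $\exists^{\mathsf i}$ are called classical. An id-model is a triple $M=(W,D,I)$ with $W$ a non-empty set of worlds, $D$ a non-empty domain, and $I$ assigning to each world $w$ an interpretation $I_w$ giving each $n$-ary predicate $P$ a relation $P_w\subseteq D^n$ and each $n$-ary function symbol $f$ a function $f_w:D^n\to D$ (rigid symbols get the same interpretation at every world); equality is interpreted as identity on $D$ at every world. Term values $[t]^g_w$ are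 defined as usual. Support of a formula at a state $s\subseteq W$ under an assignment $g$: $M,s\models_g P(t_1,\dots,t_n)$ iff $([t_1]^g_w,\dots,[t_n]^g_w)\in P_w$ for all $w\in s$; $M,s\models_g t=t'$ iff $[t]^g_w=[t']^g_w$ for all $w\in s$; $M,s\models_g\bot$ iff $s=\emptyset$; $\wedge$ is conjunction of support; $M,s\models_g\phi\mathbin{\vee\!\!\!\vee}\psi$ iff $M,s\models_g\phi$ or $M,s\models_g\psi$; $M,s\models_g\phi\to\psi$ iff for every $t\subseteq s$, $M,t\models_g\phi$ implies $M,t\models_g\psi$; $M,s\models_g\forall x\phi$ iff $M,s\models_{g[x\mapsto d]}\phi$ for all $d\in D$; $M,s\models_g\exists^{\mathsf i}x\phi$ iff $M,s\models_{g[x\mapsto d]}\phi$ for some $d\in D$. For a sentence $\phi$, $M\models\phi$ means $M,W\models\phi$. For a term $t$, $\lambda t:=\exists^{\mathsf i}x\,(x=t)$ with $x$ a variable not occurring in $t$, and $\mathrm{dep}(t,t'):=\lambda t\to\lambda t'$. For an id-model over a signature containing non-rigid constants $a,b$ and a state $s\subseteq W$, let $R_s=\{(a_w,b_w)\mid w\in s\}\subseteq D^2$. The model is full if $R_W=D^2$. *)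

(* Defs.v *)
From Stdlib Require Import List.
From mathcomp Require Import all_boot.


Record signature := Signature {
  psym : Type;
  fsym : Type;
  parity : psym -> nat;
  farity : fsym -> nat;
  rigid : fsym -> bool
}.

Section Syntax.
Variable S : signature.

Inductive term : Type :=
  | Tvar : nat -> term
  | Tfun : forall f : fsym S, ('I_(farity S f) -> term) -> term.

Inductive formula : Type :=
  | Fpred : forall p : psym S, ('I_(parity S p) -> term) -> formula
  | Feq : term -> term -> formula
  | Fbot : formula
  | Fand : formula -> formula -> formula
  | Fidis : formula -> formula -> formula
  | Fimp : formula -> formula -> formula
  | Fforall : nat -> formula -> formula
  | Fiex : nat -> formula -> formula.

Definition Fneg (phi : formula) : formula := Fimp phi Fbot.
Definition Fneq (t t' : term) : formula := Fneg (Feq t t').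

(** The term consisting of a constant symbol [c] (intended arity 0);
    the argument function is irrelevant when [farity c = 0]. *)
Definition Tconst (c : fsym S) : term := Tfun c (fun _ => Tvar 0).

(** lambda t := iexists x (x = t), with x a variable not occurring in t. *)
Definition Flambda (x : nat) (t : term) : formula := Fiex x (Feq (Tvar x) t).

Definition Fdep (x : nat) (t t' : term) : formula :=
  Fimp (Flambda x t) (Flambda x t').
End Syntax.

Arguments Tvar {S}.
Arguments Tfun {S}.
Arguments Fpred {S}. Arguments Feq {S}. Arguments Fbot {S}. Arguments Fand {S}.
Arguments Fidis {S}. Arguments Fimp {S}. Arguments Fforall {S}. Arguments Fiex {S}.
Arguments Fneg {S}. Arguments Fneq {S}. Arguments Tconst {S}.
Arguments Flambda {S}. Arguments Fdep {S}.

Record idModel (S : signature) := IdModel {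
  world : Type;
  dom : Type;
  world_ne : inhabited world;
  dom_ne : inhabited dom;
  pint : world -> forall p : psym S, ('I_(parity S p) -> dom) -> Prop;
  fint : world -> forall f : fsym S, ('I_(farity S f) -> dom) -> dom;
  fint_rigid : forall (f : fsym S) (w w' : world),
    rigid S f = true -> fint w f = fint w' f
}.

Section Semantics.
Variables (S : signature) (M : idModel S).

Definition assignment := nat -> dom S M.

Definition upd (g : assignment) (x : nat) (d : dom S M) : assignment :=
  fun y => if y == x then d else g y.

Fixpoint tval (w : world S M) (g : assignment) (t : term S) : dom S M :=
  match t with
  | Tvar x => g x
  | Tfun f args => fint S M w f (fun i => tval w g (args i))
  end.

Definition state := world S M -> Prop.

Fixpoint supp (phi : formula S) (s : state) (g : assignment) : Prop :=
  match phi with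
  | Fpred p args => forall w, s w -> pint S M w p (fun i => tval w g (args i))
  | Feq t t' => forall w, s w -> tval w g t = tval w g t'
  | Fbot => forall w, ~ s w
  | Fand phi psi => supp phi s g /\ supp psi s g
  | Fidis phi psi => supp phi s g \/ supp psi s g
  | Fimp phi psi => forall t : state, (forall w, t w -> s w) ->
                      supp phi t g -> supp psi t g
  | Fforall x phi => forall d, supp phi s (upd g x d)
  | Fiex x phi => exists d, supp phi s (upd g x d)
  end.

(** M |= phi for a sentence phi: support at the full state W
    (under any assignment; for sentences the assignment is irrelevant). *)
Definition models (phi : formula S) : Prop :=
  forall g : assignment, supp phi (fun _ => True) g.

(** The model is full (w.r.t. constants a, b) if R_W = D^2, where
    R_s = {(a_w, b_w) | w in s}. *)
Definition full (a b : fsym S) : Prop :=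
  forall (g : assignment) (d1 d2 : dom S M),
    exists w : world S M, tval w g (Tconst a) = d1 /\ tval w g (Tconst b) = d2.

Definition dom_finite : Prop :=
  exists l : list (dom S M), forall d : dom S M, List.In d l.
End Semantics.
Arguments tval {S M}. Arguments supp {S M}.
Arguments models {S} M. Arguments full {S} M. Arguments dom_finite {S} M.

Definition eta {S : signature} (a b : fsym S) : formula S :=
  Fimp (Fand (Fdep 0 (Tconst a) (Tconst b))
             (Fand (Fdep 0 (Tconst b) (Tconst a))
                   (Fiex 0 (Fneq (Tvar 0) (Tconst b)))))
       (Fiex 0 (Fneq (Tvar 0) (Tconst a))).

(* Main.v *)
Require Import Defs.
From Stdlib Require Import List Classical ClassicalEpsilon FunctionalExtensionality Lia.
From Stdlib Require Import FinFun.

Lemma tconst_indep S M c (H : farity S c = 0) w g g' :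
  @tval S M w g (Tconst c) = tval w g' (Tconst c).
Proof.
  simpl. f_equal. apply functional_extensionality. intros [i Hi].
  exfalso. rewrite H in Hi. discriminate.
Qed.

Lemma upd_same S M (g : assignment S M) d : upd S M g 0 d 0 = d.
Proof. reflexivity. Qed.

Section Main.
Variables (S : signature) (a b : fsym S)
  (Ha0 : farity S a = 0) (Hb0 : farity S b = 0) (M : idModel S).

Lemma dir1 : dom_finite M -> models M (eta a b).
Proof.
  intros Hfin g. cbn [supp eta Fdep Flambda Fneq Fneg]. intros t _ [Hab [Hba [d0 Hd0]]].
  set (A := fun w => tval w g (Tconst a)).
  set (B := fun w => tval w g (Tconst b)).
  assert (Ea : forall w g', tval w g' (Tconst a) = A w) by (intros; apply tconst_indep; auto).
  assert (Eb : forall w g', tval w g' (Tconst b) = B w) by (intros; apply tconst_indep; auto).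
  apply NNPP; intro Hn.
  assert (Hsurj : forall d, exists w, t w /\ A w = d).
  { intro d. apply NNPP; intro Hnd. apply Hn. exists d.
    intros u Hu Heq w Hw. apply Hnd. exists w. split; [auto|].
    specialize (Heq w Hw). rewrite Ea in Heq. cbn [tval] in Heq. rewrite upd_same in Heq. auto. }
  set (W' := fun d => proj1_sig (constructive_indefinite_description _ (Hsurj d))).
  assert (HW : forall d, t (W' d) /\ A (W' d) = d).
  { intro d. exact (proj2_sig (constructive_indefinite_description _ (Hsurj d))). }
  set (h := fun d => B (W' d)).
  assert (Hinj : Injective h).
  { intros d1 d2 Hh.
    set (u := fun w => w = W' d1 \/ w = W' d2).
    assert (Hu : forall w, u w -> t w).
    { intros w [-> | ->]; apply HW. }
    destruct (Hba u Hu) as [e He].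
    { exists (h d1). intros w [-> | ->]; rewrite Eb; cbn [tval]; rewrite upd_same; auto. }
    pose proof (He (W' d1) (or_introl eq_refl)) as E1.
    pose proof (He (W' d2) (or_intror eq_refl)) as E2.
    rewrite Ea in E1, E2. cbn [tval] in E1, E2. rewrite upd_same in E1, E2.
    destruct (HW d1) as [_ A1]. destruct (HW d2) as [_ A2]. congruence. }
  assert (Hdec : forall x y : dom S M, x = y \/ x <> y).
  { intros x y. apply classic. }
  destruct (proj1 (@Endo_Injective_Surjective _ Hfin Hdec h) Hinj d0) as [x Hx].
  apply (Hd0 (fun w => w = W' x)) with (w := W' x); auto.
  - intros w ->. apply HW.
  - intros w ->. rewrite Eb. cbn [tval]. rewrite upd_same. auto.
Qed.

Lemma inf_seq : ~ dom_finite M ->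
  exists f : nat -> dom S M, forall m n, f m = f n -> m = n.
Proof.
  intros Hnf.
  assert (Hfr : forall l : list (dom S M), exists d, ~ In d l).
  { intros l. apply NNPP; intro H. apply Hnf. exists l. intro d.
    apply NNPP; intro H'. apply H. exists d. auto. }
  set (fr := fun l => proj1_sig (constructive_indefinite_description _ (Hfr l))).
  assert (Hfr' : forall l, ~ In (fr l) l).
  { intro l. exact (proj2_sig (constructive_indefinite_description _ (Hfr l))). }
  set (F := fix F n := match n with 0 => nil | Datatypes.S n' => fr (F n') :: F n' end).
  exists (fun n => fr (F n)).
  assert (Hin : forall m k, In (fr (F m)) (F (Datatypes.S m + k))).
  { intros m k. induction k.
    - rewrite PeanoNat.Nat.add_0_r. simpl. left. reflexivity.
    - rewrite PeanoNat.Nat.add_succ_r. simpl. right. exact IHk. }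
  assert (Hlt : forall m n, m < n -> fr (F m) <> fr (F n)).
  { intros m n Hmn E. destruct (PeanoNat.Nat.le_exists_sub (Datatypes.S m) n) as [k [Hk _]]; [lia|].
    apply (Hfr' (F n)). rewrite <- E. rewrite Hk.
    rewrite PeanoNat.Nat.add_comm. apply Hin. }
  intros m n E. destruct (PeanoNat.Nat.lt_trichotomy m n) as [H|[H|H]]; auto.
  - exfalso. exact (Hlt _ _ H E).
  - exfalso. exact (Hlt _ _ H (eq_sym E)).
Qed.

Lemma dir2 : full M a b -> models M (eta a b) -> dom_finite M.
Proof.
  intros Hfull Hm. apply NNPP; intro Hnf.
  destruct (inf_seq Hnf) as [f Hf].
  destruct (dom_ne S M) as [d00].
  set (g := fun _ : nat => d00).
  set (A := fun w => tval w g (Tconst a)).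
  set (B := fun w => tval w g (Tconst b)).
  assert (Ea : forall w g', tval w g' (Tconst a) = A w) by (intros; apply tconst_indep; auto).
  assert (Eb : forall w g', tval w g' (Tconst b) = B w) by (intros; apply tconst_indep; auto).
  set (h := fun d => match excluded_middle_informative (exists n, f n = d) with
                     | left H => f (Datatypes.S (proj1_sig (constructive_indefinite_description _ H)))
                     | right _ => d end).
  assert (Hh0 : forall d, h d <> f 0).
  { intros d. unfold h. destruct (excluded_middle_informative _) as [H|H].
    - intro E. apply Hf in E. discriminate.
    - intro E. apply H. exists 0. auto. }
  assert (Hinj : forall d1 d2, h d1 = h d2 -> d1 = d2).
  { intros d1 d2. unfold h.
    destruct (excluded_middle_informative (exists n, f n = d1)) as [H1|H1];
    destruct (excluded_middle_informative (exists n, f n = d2)) as [H2|H2].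
    - destruct (constructive_indefinite_description _ H1) as [n1 E1].
      destruct (constructive_indefinite_description _ H2) as [n2 E2]. simpl.
      intro E. apply Hf in E. injection E as ->. congruence.
    - intro E. exfalso. apply H2. eexists. exact E.
    - intro E. exfalso. apply H1. eexists. exact (eq_sym E).
    - auto. }
  set (t := fun w => B w = h (A w)).
  specialize (Hm g). cbn [supp eta Fdep Flambda Fneq Fneg] in Hm.
  destruct (Hm t (fun _ _ => I)) as [d Hd].
  - split; [|split].
    + intros u Hu [e He]. exists (h e). intros w Hw.
      specialize (He w Hw). rewrite Ea in He. cbn [tval] in He. rewrite upd_same in He.
      rewrite Eb. cbn [tval]. rewrite upd_same. rewrite (Hu w Hw). congruence.
    + intros u Hu [e He].
      destruct (classic (exists w, u w)) as [[w0 Hw0]|Hne].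
      * exists (A w0). intros w Hw. rewrite Ea. cbn [tval]. rewrite upd_same.
        apply Hinj. rewrite <- (Hu w Hw), <- (Hu w0 Hw0).
        pose proof (He w Hw) as E1. pose proof (He w0 Hw0) as E2.
        rewrite Eb in E1, E2. cbn [tval] in E1, E2. rewrite upd_same in E1, E2. congruence.
      * exists d00. intros w Hw. exfalso. apply Hne. eauto.
    + exists (f 0). intros u Hu He w Hw.
      specialize (He w Hw). rewrite Eb in He. cbn [tval] in He. rewrite upd_same in He.
      apply (Hh0 (A w)). rewrite <- (Hu w Hw). auto.
  - destruct (Hfull g d (h d)) as [w [Ew1 Ew2]].
    apply (Hd (fun w' => w' = w)) with (w := w); auto.
    + intros w' ->. unfold t. fold (A w) in Ew1. fold (B w) in Ew2. congruence.
    + intros w' ->. rewrite Ea. cbn [tval]. rewrite upd_same. auto.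
Qed.
End Main.

Theorem mainTheorem1 (S : signature) (a b : fsym S)
  (Ha0 : farity S a = 0) (Hb0 : farity S b = 0)
  (Har : rigid S a = false) (Hbr : rigid S b = false)
  (M : idModel S) (Hfull : full M a b) :
  models M (eta a b) <-> dom_finite M.
Proof.
  split.
  - apply dir2; auto.
  - apply dir1; auto.
Qed.
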